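(* Let $((\mathcal{S},\mathcal{T}),(\mathcal{U},\mathcal{V}))$ be a twin cotorsion pair on a triangulated category $\mathcal{C}$, and put $\mathcal{W}=\mathcal{U}\cap\mathcal{T}$, $\mathcal{C}^+=\mathcal{W}*\mathcal{V}[1]$, $\mathcal{C}^-=\mathcal{S}[-1]*\mathcal{W}$, $\mathcal{H}=\mathcal{C}^+\cap\mathcal{C}^-$. Then $\mathcal{H}\cap(\mathcal{U}*\mathcal{T})=\mathcal{W}$.
   Context: For full subcategories $\mathcal{X},\mathcal{Y}$, $\mathcal{X}*\mathcal{Y}$ is the full subcategory of objects $C$ admitting a distinguished triangle $X\to C\to Y\to X[1]$ with $X\in\mathcal{X}$, $Y\in\mathcal{Y}$. A cotorsion pair $(\mathcal{A},\mathcal{B})$: full subcategories closed under isomorphisms, finite direct sums and summands with $\mathcal{C}=\mathcal{A}*\mathcal{B}[1]$ and $\mathcal{C}(\mathcal{A},\mathcal{B}[1])=0$. A twin cotorsion pair $((\mathcal{S},\mathcal{T}),(\mathcal{U},\mathcal{V}))$ consists of two cotorsion pairs with $\mathcal{C}(\mathcal{S},\mathcal{V}[1])=0$. *)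

(* Defs.v *)
From HB Require Import structures.
From mathcomp Require Import all_boot all_algebra.
Set Implicit Arguments. Unset Strict Implicit. Unset Printing Implicit Defensive.
Import GRing.Theory.
Local Open Scope ring_scope.

Record PreaddCat := {
  Obj : Type;
  Hom : Obj -> Obj -> zmodType;
  idm : forall X : Obj, Hom X X;
  comp : forall X Y Z : Obj, Hom Y Z -> Hom X Y -> Hom X Z;
  compA : forall X Y Z W (h : Hom Z W) (g : Hom Y Z) (f : Hom X Y),
      comp h (comp g f) = comp (comp h g) f;
  comp1m : forall X Y (f : Hom X Y), comp (idm Y) f = f;
  compm1 : forall X Y (f : Hom X Y), comp f (idm X) = f;
  compDl : forall X Y Z (g g' : Hom Y Z) (f : Hom X Y),
      comp (g + g') f = comp g f + comp g' f;
  compDr : forall X Y Z (g : Hom Y Z) (f f' : Hom X Y),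
      comp g (f + f') = comp g f + comp g f'
}.
Arguments idm {_} X.
Arguments comp {_ X Y Z} g f.

Section PreaddDefs.
Variable C : PreaddCat.

Definition is_iso (X Y : Obj C) (f : Hom X Y) : Prop :=
  exists g : Hom Y X, comp g f = idm X /\ comp f g = idm Y.

Definition isomorphic (X Y : Obj C) : Prop := exists f : Hom X Y, is_iso f.

Definition is_zero_obj (Z : Obj C) : Prop := idm Z = 0.

Definition is_biprod (X Y P : Obj C) (i1 : Hom X P) (i2 : Hom Y P)
    (p1 : Hom P X) (p2 : Hom P Y) : Prop :=
  [/\ comp p1 i1 = idm X, comp p2 i2 = idm Y, comp p1 i2 = 0, comp p2 i1 = 0
    & comp i1 p1 + comp i2 p2 = idm P].

Definition is_direct_sum (X Y P : Obj C) : Prop :=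
  exists i1 i2 p1 p2, @is_biprod X Y P i1 i2 p1 p2.
End PreaddDefs.

Record AddCat := {
  pa :> PreaddCat;
  has_zero : exists Z : Obj pa, is_zero_obj Z;
  has_biprod : forall X Y : Obj pa, exists P : Obj pa, is_direct_sum X Y P
}.

Record TriCat := {
  ac :> AddCat;
  sh : Obj ac -> Obj ac;
  shm : forall X Y : Obj ac, Hom X Y -> Hom (sh X) (sh Y);
  shm_id : forall X, shm (idm X) = idm (sh X);
  shm_comp : forall X Y Z (g : Hom Y Z) (f : Hom X Y),
      shm (comp g f) = comp (shm g) (shm f);
  shm_add : forall X Y (f g : Hom X Y), shm (f + g) = shm f + shm g;
  (* [1] is an auto-equivalence: fully faithful and essentially surjective *)
  shm_ff : forall X Y : Obj ac, bijective (@shm X Y);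
  sh_ess : forall Y, exists X, isomorphic (sh X) Y;
  dist : forall X Y Z : Obj ac, Hom X Y -> Hom Y Z -> Hom Z (sh X) -> Prop;
  TR1_iso : forall X Y Z X' Y' Z' (f : Hom X Y) (g : Hom Y Z) (h : Hom Z (sh X))
      (f' : Hom X' Y') (g' : Hom Y' Z') (h' : Hom Z' (sh X'))
      (a : Hom X X') (b : Hom Y Y') (c : Hom Z Z'),
      dist f g h -> is_iso a -> is_iso b -> is_iso c ->
      comp f' a = comp b f -> comp g' b = comp c g -> comp h' c = comp (shm a) h ->
      dist f' g' h';
  TR1_id : forall X Z : Obj ac, is_zero_obj Z ->
      dist (idm X) (0 : Hom X Z) (0 : Hom Z (sh X));
  TR1_ext : forall X Y (f : Hom X Y), exists Z (g : Hom Y Z) (h : Hom Z (sh X)),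
      dist f g h;
  TR2 : forall X Y Z (f : Hom X Y) (g : Hom Y Z) (h : Hom Z (sh X)),
      dist f g h <-> dist g h (- shm f);
  TR3 : forall X Y Z X' Y' Z' (f : Hom X Y) (g : Hom Y Z) (h : Hom Z (sh X))
      (f' : Hom X' Y') (g' : Hom Y' Z') (h' : Hom Z' (sh X'))
      (a : Hom X X') (b : Hom Y Y'),
      dist f g h -> dist f' g' h' -> comp f' a = comp b f ->
      exists c : Hom Z Z', comp g' b = comp c g /\ comp h' c = comp (shm a) h;
  TR4 : forall X Y Z Z' X' Y' (f : Hom X Y) (g : Hom Y Z)
      (u : Hom Y Z') (u' : Hom Z' (sh X))
      (v : Hom Z X') (v' : Hom X' (sh Y))
      (w : Hom Z Y') (w' : Hom Y' (sh X)),
      dist f u u' -> dist g v v' -> dist (comp g f) w w' ->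
      exists (a : Hom Z' Y') (b : Hom Y' X'),
        [/\ dist a b (comp (shm u) v'),
            comp a u = comp w g, comp w' a = u',
            comp b w = v & comp v' b = comp (shm f) w']
}.
Arguments sh {_} X.
Arguments shm {_ X Y} f.
Arguments dist {_ X Y Z} f g h.

Section SubDefs.
Variable C : TriCat.

(* full subcategories are given by predicates on objects *)
Definition subcat := Obj C -> Prop.

(* X[1] : the (isomorphism-closed) image of X under [1] *)
Definition shift1 (X : subcat) : subcat :=
  fun Y => exists A, X A /\ isomorphic (sh A) Y.

(* X[-1] : the (isomorphism-closed) image of X under [-1],
   i.e. objects Y with Y[1] isomorphic to an object of X *)
Definition shiftm1 (X : subcat) : subcat :=
  fun Y => exists A, X A /\ isomorphic (sh Y) A.

Definition ext (X Y : subcat) : subcat :=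
  fun M => exists (A B : Obj C) (f : Hom A M) (g : Hom M B) (h : Hom B (sh A)),
    [/\ X A, Y B & dist f g h].

Definition inter (X Y : subcat) : subcat := fun M => X M /\ Y M.

Definition hom_vanish (X Y : subcat) : Prop :=
  forall A B, X A -> Y B -> forall f : Hom A B, f = 0.

Definition good_subcat (X : subcat) : Prop :=
  [/\ (forall A B, isomorphic A B -> X A -> X B),
      (forall Z, is_zero_obj Z -> X Z),
      (forall A B P, is_direct_sum A B P -> X A -> X B -> X P)
    & (forall A B P, is_direct_sum A B P -> X P -> X A)].

Definition cotorsion_pair (A B : subcat) : Prop :=
  [/\ good_subcat A, good_subcat B,
      (forall M, ext A (shift1 B) M)
    & hom_vanish A (shift1 B)].

Definition twin_cotorsion_pair (S T U V : subcat) : Prop :=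
  [/\ cotorsion_pair S T, cotorsion_pair U V & hom_vanish S (shift1 V)].

Definition coreW (T U : subcat) : subcat := inter U T.
Definition Cplus (T U V : subcat) : subcat := ext (coreW T U) (shift1 V).
Definition Cminus (S T U : subcat) : subcat := ext (shiftm1 S) (coreW T U).
Definition heart (S T U V : subcat) : subcat :=
  inter (Cplus T U V) (Cminus S T U).
End SubDefs.

(* Main.v *)
Require Import Defs.
From mathcomp Require Import all_boot all_algebra.
Import Defs.
Set Implicit Arguments. Unset Strict Implicit. Unset Printing Implicit Defensive.
Import GRing.Theory.
Local Open Scope ring_scope.

Section Aux.
Variable C : TriCat.

Lemma comp0m (X Y Z : Obj C) (f : Hom X Y) : comp (0 : Hom Y Z) f = 0.
Proof.
have H := @compDl C _ _ _ (0 : Hom Y Z) 0 f; rewrite addr0 in H.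
by apply: (addrI (comp (0 : Hom Y Z) f)); rewrite addr0 -H.
Qed.

Lemma compm0 (X Y Z : Obj C) (g : Hom Y Z) : comp g (0 : Hom X Y) = 0.
Proof.
have H := @compDr C _ _ _ g (0 : Hom X Y) 0; rewrite addr0 in H.
by apply: (addrI (comp g (0 : Hom X Y))); rewrite addr0 -H.
Qed.

Lemma compNm (X Y Z : Obj C) (g : Hom Y Z) (f : Hom X Y) : comp (- g) f = - comp g f.
Proof.
have H := @compDl C _ _ _ g (- g) f; rewrite subrr comp0m in H.
by apply/eqP; rewrite -subr_eq0 opprK addrC -H.
Qed.

Lemma compmN (X Y Z : Obj C) (g : Hom Y Z) (f : Hom X Y) : comp g (- f) = - comp g f.
Proof.
have H := @compDr C _ _ _ g f (- f); rewrite subrr compm0 in H.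
by apply/eqP; rewrite -subr_eq0 opprK addrC -H.
Qed.

Lemma compBl (X Y Z : Obj C) (g g' : Hom Y Z) (f : Hom X Y) :
  comp (g - g') f = comp g f - comp g' f.
Proof. by rewrite compDl compNm. Qed.

Lemma compBr (X Y Z : Obj C) (g : Hom Y Z) (f f' : Hom X Y) :
  comp g (f - f') = comp g f - comp g f'.
Proof. by rewrite compDr compmN. Qed.

Lemma shm0 (X Y : Obj C) : shm (0 : Hom X Y) = 0.
Proof.
have H := @shm_add C _ _ (0 : Hom X Y) 0; rewrite addr0 in H.
by apply: (addrI (shm (0 : Hom X Y))); rewrite addr0 -H.
Qed.

Lemma shmN (X Y : Obj C) (f : Hom X Y) : shm (- f) = - shm f.
Proof.
have H := @shm_add C _ _ f (- f); rewrite subrr shm0 in H.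
by apply/eqP; rewrite -subr_eq0 opprK addrC -H.
Qed.

Lemma shm_inj (X Y : Obj C) : injective (@shm C X Y).
Proof. exact: bij_inj (shm_ff X Y). Qed.

Lemma shm_surj (X Y : Obj C) (c : Hom (sh X) (sh Y)) : exists f, shm f = c.
Proof. case: (shm_ff X Y) => g _ K; exists (g c); exact: K. Qed.

Lemma sh_zero (Z : Obj C) : is_zero_obj Z -> is_zero_obj (sh Z).
Proof. by rewrite /is_zero_obj => hz; rewrite -shm_id hz shm0. Qed.

Lemma zeros_iso (Z Z' : Obj C) : is_zero_obj Z -> is_zero_obj Z' -> isomorphic Z Z'.
Proof.
move=> h1 h2; exists 0; exists 0; split; by rewrite comp0m ?h1 ?h2.
Qed.

Lemma iso_refl (X : Obj C) : isomorphic X X.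
Proof. exists (idm X); exists (idm X); split; by rewrite comp1m. Qed.

Lemma rot0 (Z0 W : Obj C) : is_zero_obj Z0 ->
  dist (0 : Hom Z0 W) (idm W) (0 : Hom W (sh Z0)).
Proof.
move=> hz; apply/TR2; rewrite shm0 oppr0; exact: TR1_id (sh_zero hz).
Qed.

Lemma exact_pre (X Y Z W : Obj C) (f : Hom X Y) (g : Hom Y Z) (h : Hom Z (sh X))
  (phi : Hom Y W) : dist f g h -> comp phi f = 0 -> exists psi, phi = comp psi g.
Proof.
move=> Hd E; have [Z0 hz] := has_zero C.
have E' : comp (0 : Hom Z0 W) (0 : Hom X Z0) = comp phi f by rewrite E comp0m.
have [c [H1 _]] := @TR3 C _ _ _ _ _ _ f g h _ _ _ 0 phi Hd (rot0 W hz) E'.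
by exists c; rewrite -H1 comp1m.
Qed.

Lemma exact_post (X Y Z W : Obj C) (f : Hom X Y) (g : Hom Y Z) (h : Hom Z (sh X))
  (psi : Hom W Y) : dist f g h -> comp g psi = 0 -> exists sig, comp f sig = psi.
Proof.
move=> Hd E; have [Z0 hz] := has_zero C.
have Hs : dist (0 : Hom W Z0) (0 : Hom Z0 (sh W)) (- shm (idm W)).
  exact: (proj1 (TR2 _ _ _) (TR1_id W hz)).
have Ht := proj1 (TR2 f g h) Hd.
have E' : comp g psi = comp (0 : Hom Z0 Z) (0 : Hom W Z0) by rewrite E comp0m.
have [c [_ H2]] := @TR3 C _ _ _ _ _ _ _ _ _ _ _ _ psi 0 Hs Ht E'.
have [s Hs'] := shm_surj c; exists s; apply: shm_inj.
move: H2; rewrite -Hs' compNm compmN shm_id compm1 -shm_comp.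
by move/eqP; rewrite eqr_opp => /eqP.
Qed.

Lemma comp_dist0 (X Y Z : Obj C) (f : Hom X Y) (g : Hom Y Z) (h : Hom Z (sh X)) :
  dist f g h -> comp g f = 0.
Proof.
move=> Hd; have [Z0 hz] := has_zero C.
have E : comp f (idm X) = comp f (idm X) by [].
have [c [H1 _]] := @TR3 C _ _ _ _ _ _ _ _ _ _ _ _ (idm X) f (TR1_id X hz) Hd E.
by rewrite H1 compm0.
Qed.

Lemma mono_fst (K X Y W : Obj C) (i : Hom K X) (f : Hom X Y) :
  dist i f (0 : Hom Y (sh K)) -> forall phi : Hom W K, comp i phi = 0 -> phi = 0.
Proof.
move=> Hd phi E.
have H1 := proj1 (TR2 _ _ _) Hd.
have H2 := proj1 (TR2 _ _ _) H1.
have E' : comp (- shm i) (shm phi) = 0 by rewrite compNm -shm_comp E shm0 oppr0.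
have [l Hl] := exact_post H2 E'.
by apply: shm_inj; rewrite -Hl comp0m shm0.
Qed.

Lemma split_dist (X Y Z : Obj C) (f : Hom X Y) (h : Hom Z (sh X)) :
  dist f (0 : Hom Y Z) h -> exists K, is_direct_sum Y K X.
Proof.
move=> Hd.
have [s Hs] := @exact_post _ _ _ _ f _ h (idm Y) Hd (comp0m _ _).
have [K [a [a' [Ha1 Ha2]]]] := sh_ess Z.
have [i' Hi'] := shm_surj (comp h a).
have Hd' : dist f (0 : Hom Y (sh K)) (comp h a).
  apply: (@TR1_iso C _ _ _ _ _ _ _ _ _ _ _ _ (idm X) (idm Y) a' Hd).
  - by exists (idm X); rewrite comp1m.
  - by exists (idm Y); rewrite comp1m.
  - by exists a.
  - by rewrite compm1 comp1m.
  - by rewrite comp0m compm0.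
  - by rewrite -compA Ha2 compm1 shm_id comp1m.
have Hdi : dist (- i') f (0 : Hom Y (sh K)).
  by apply/TR2; rewrite shmN opprK Hi'.
have fi : comp f (- i') = 0 by exact: comp_dist0 Hdi.
have E : comp f (idm X - comp s f) = 0.
  by rewrite compBr compm1 compA Hs comp1m subrr.
have [p Hp] := exact_post Hdi E.
exists K, s, (- i'), f, p; split => //.
- apply/eqP; rewrite -subr_eq0; apply/eqP; apply: (mono_fst Hdi).
  by rewrite compBr compm1 compA Hp compBl comp1m -compA fi compm0 subr0 subrr.
- apply: (mono_fst Hdi).
  by rewrite compA Hp compBl comp1m -compA Hs compm1 subrr.
- by rewrite Hp addrC subrK.
Qed.

End Aux.

Theorem lemma2p6 (C : TriCat) (S T U V : subcat C) :
  twin_cotorsion_pair S T U V ->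
  forall M : Obj C,
    inter (heart S T U V) (ext U T) M <-> coreW T U M.
Proof.
move=> [[[_ gS0 _ _] [_ gT0 _ gT4] _ vanST] [[_ gU0 _ gU4] [_ gV0 _ _] _ vanUV] _] M.
split.
- move=> [[Hplus Hminus] Hut].
  have [W1 [B [w1 [g [h [[HW1U HW1T] HB Hd1]]]]]] := Hplus.
  have [A [W0 [fA [w [h2 [HA [HW0U HW0T] Hd2]]]]]] := Hminus.
  have [U0 [T0 [u [t [h3 [HU0 HT0 Hd3]]]]]] := Hut.
  have gu : comp g u = 0 by exact: vanUV.
  have [psi Hpsi] := exact_pre Hd3 gu.
  have tf : comp t fA = 0.
    have [A' [HA' [b [b' [Hb1 Hb2]]]]] := HA.
    have Z : comp (shm (comp t fA)) b' = 0.
      apply: (vanST _ (sh T0) HA'); exists T0; split => //; exact: iso_refl.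
    apply: shm_inj; rewrite shm0.
    by rewrite -(compm1 (shm (comp t fA))) -Hb1 compA Z comp0m.
  have [c Hc] := exact_pre Hd2 tf.
  have pc : comp psi c = 0 by exact: vanUV.
  have g0 : g = 0 by rewrite Hpsi Hc compA pc comp0m.
  rewrite g0 in Hd1.
  have [K HK] := split_dist Hd1.
  split; [exact: gU4 HK HW1U | exact: gT4 HK HW1T].
- move=> [HU HT]; have [Z0 hz] := has_zero C.
  split; first split.
  + exists M, Z0, (idm M), 0, 0; split => //; last exact: TR1_id.
    exists Z0; split; [exact: gV0 | exact: zeros_iso (sh_zero hz) hz].
  + exists Z0, M, 0, (idm M), 0; split => //; last exact: rot0.
    exists (sh Z0); split; [exact: gS0 (sh_zero hz) | exact: iso_refl].
  + exists M, Z0, (idm M), 0, 0; split => //; last exact: TR1_id.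
    exact: gT0.
Qed.
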